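(* Let $N\ge1$ and let $(A_N,H_N,D_N)$ be the fuzzy sphere spectral triple described in the context. Then the space of junk $2$-forms $$J^2=\Big\{\sum_j[D_N,a_j][D_N,b_j]\ :\ a_j,b_j\in A_N,\ \sum_ja_j[D_N,b_j]=0\Big\}\subseteq A_N\otimes_{\mathbb{C}}M_2(\mathbb{C})$$ is equal to the subspace $\{Y\otimes_{\mathbb{C}}1:Y\in A_N\}$.
   Context: Let $J_1,J_2,J_3$ be a basis of $su(2)$ with $[J_k,J_l]=\sum_m\epsilon_{klm}J_m$ ($\epsilon_{123}=1$, totally antisymmetric). For $n\ge0$, $\rho_{n/2}$ is the $(n+1)$-dimensional irreducible unitary representation of $su(2)$ (so $\rho_{n/2}(J_k)$ are skew-Hermitian). $K_N=\oplus_{n=0}^N\mathbb{C}^{n+1}$, $X_k=\oplus_{n=0}^N\rho_{n/2}(J_k)$, $A_N=B(K_N)$, $H_N=K_N\otimes\mathbb{C}^2$ with $A_N$ acting via $a\mapsto a\otimes1$; $\tau_k$ the Pauli matrices, $\sigma_k=\sqrt{-1}\tau_k$, $D_N=\sum_kX_k\otimes\sigma_k$; $B(H_N)$ is identified with $A_N\otimes_{\mathbb{C}}M_2(\mathbb{C})$. *)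

(* Defs.v *)
From HB Require Import structures.
From mathcomp Require Import all_boot all_order all_algebra.
From mathcomp.real_closed Require Import mxtens.
Set Implicit Arguments. Unset Strict Implicit. Unset Printing Implicit Defensive.
Import Order.TTheory GRing.Theory Num.Theory.
Local Open Scope ring_scope.

Section FuzzySphere.
Variable C : numClosedFieldType.

Definition adjmx {m n} (A : 'M[C]_(m, n)) : 'M[C]_(n, m) := (map_mx Num.conj A)^T.

Definition commx {n} (A B : 'M[C]_n) : 'M[C]_n := A *m B - B *m A.

(* Levi-Civita symbol on indices 0,1,2 (standing for 1,2,3), eps_{012} = 1 *)
Definition levi (k l m : 'I_3) : C :=
  let t := (nat_of_ord k, nat_of_ord l, nat_of_ord m) in
  if (t == (0,1,2)%N) || (t == (1,2,0)%N) || (t == (2,0,1)%N) then 1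
  else if (t == (0,2,1)%N) || (t == (2,1,0)%N) || (t == (1,0,2)%N) then -1
  else 0.

(* r : 'I_3 -> 'M_n is a representation of su(2) with
   [r k, r l] = sum_m eps_{klm} r m, by skew-Hermitian matrices,
   which is irreducible (no invariant subspace other than 0 and C^n;
   a column subspace W is r-invariant iff the row space of W^T is
   stable under the r k ^T). *)
Definition su2_irrep {n} (r : 'I_3 -> 'M[C]_n) : Prop :=
  [/\ forall k l, commx (r k) (r l) = \sum_(m < 3) levi k l m *: r m,
      forall k, adjmx (r k) = - r k
    & forall U : 'M[C]_n, (forall k, stablemx U (r k)^T) ->
        (U == 0) || row_full U].

(* Pauli matrices tau_k (k = 0,1,2 standing for 1,2,3) and sigma_k = i tau_k *)
Definition pauli (k : 'I_3) : 'M[C]_2 :=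
  \matrix_(i < 2, j < 2)
    if nat_of_ord k == 0%N then (if nat_of_ord i == nat_of_ord j then 0 else 1)
    else if nat_of_ord k == 1%N then
      (if nat_of_ord i == nat_of_ord j then 0
       else if nat_of_ord i == 0%N then - 'i else 'i)
    else (if nat_of_ord i == nat_of_ord j then
            (if nat_of_ord i == 0%N then 1 else -1) else 0).

Definition sigma (k : 'I_3) : 'M[C]_2 := 'i *: pauli k.

Definition fzdim (N : nat) : nat := \sum_(n < N.+1) n.+1.

(* X_k = direct sum over n = 0..N of rho_{n/2}(J_k) *)
Definition fzX (N : nat) (rho : forall n : 'I_N.+1, 'I_3 -> 'M[C]_n.+1)
  (k : 'I_3) : 'M[C]_(fzdim N) :=
  \mxdiag_(n < N.+1) rho n k.

Definition fzD (N : nat) (rho : forall n : 'I_N.+1, 'I_3 -> 'M[C]_n.+1)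
  : 'M[C]_(fzdim N * 2) :=
  \sum_(k < 3) tensmx (fzX rho k) (sigma k).

(* the representation a |-> a (x) 1 of A_N = B(K_N) on H_N *)
Definition fzrep {d} (a : 'M[C]_d) : 'M[C]_(d * 2) := tensmx a (1%:M : 'M[C]_2).

Definition junk2 {d} (D : 'M[C]_(d * 2)) (M : 'M[C]_(d * 2)) : Prop :=
  exists (m : nat) (a b : 'I_m -> 'M[C]_d),
    \sum_(j < m) fzrep (a j) *m commx D (fzrep (b j)) = 0 /\
    M = \sum_(j < m) commx D (fzrep (a j)) *m commx D (fzrep (b j)).

End FuzzySphere.

(* Main.v *)
Require Import Defs.
From HB Require Import structures.
From mathcomp Require Import all_boot all_order all_algebra.
From mathcomp.real_closed Require Import mxtens.
From mathcomp Require Import ring.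
Import Order.TTheory GRing.Theory Num.Theory.
Local Open Scope ring_scope.

Definition i0 : 'I_3 := @Ordinal 3 0 isT.
Definition i1 : 'I_3 := @Ordinal 3 1 isT.
Definition i2 : 'I_3 := @Ordinal 3 2 isT.

Lemma sum3 (V : nmodType) (f : 'I_3 -> V) : \sum_(m < 3) f m = f i0 + f i1 + f i2.
Proof.
rewrite !big_ord_recr big_ord0 /= add0r.
by congr (f _ + f _ + f _); apply/val_inj.
Qed.

Lemma ord3P (P : 'I_3 -> Prop) : P i0 -> P i1 -> P i2 -> forall k, P k.
Proof.
move=> h0 h1 h2 [[|[|[|//]]] H].
- by rewrite (_ : Ordinal H = i0) //; apply/val_inj.
- by rewrite (_ : Ordinal H = i1) //; apply/val_inj.
- by rewrite (_ : Ordinal H = i2) //; apply/val_inj.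
Qed.

Section Gen.
Variable C : numClosedFieldType.

Lemma termid n (D K A B : 'M[C]_n) : D *m D = - K - D ->
  commx D A *m commx D B = D *m (A *m commx D B) + (A *m commx D B) *m D
     + A *m commx D B + A *m (K *m B - B *m K).
Proof.
move=> H.
have HK : K = - (D *m D) - D by rewrite H opprB opprK addrC addKr.
rewrite /commx HK.
rewrite !(mulmxBl, mulmxBr, mulmxDl, mulmxDr, mulNmx, mulmxN, mulmxA).
set a1 := D *m A *m D *m B. set a2 := D *m A *m B *m D.
set a3 := A *m D *m D *m B. set a4 := A *m D *m B *m D.
set a5 := A *m B *m D *m D. set a6 := A *m D *m B. set a7 := A *m B *m D.
rewrite !opprB !opprK !addrA.
by rewrite [RHS](ACl (1*2*7*3*(4*10)*(5*8)*(6*9))%AC) /= !addNr !subrr !addr0.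
Qed.

Lemma tensmxDl m n p q (A B : 'M[C]_(m,n)) (E : 'M[C]_(p,q)) :
  (A + B) *t E = A *t E + B *t E.
Proof. by apply/matrixP => i j; rewrite !mxE mulrDl. Qed.
Lemma tensmxDr m n p q (A : 'M[C]_(m,n)) (E F : 'M[C]_(p,q)) :
  A *t (E + F) = A *t E + A *t F.
Proof. by apply/matrixP => i j; rewrite !mxE mulrDr. Qed.
Lemma tensmxNl m n p q (A : 'M[C]_(m,n)) (E : 'M[C]_(p,q)) :
  (- A) *t E = - (A *t E).
Proof. by apply/matrixP => i j; rewrite !mxE mulNr. Qed.
Lemma tensmxNr m n p q (A : 'M[C]_(m,n)) (E : 'M[C]_(p,q)) :
  A *t (- E) = - (A *t E).
Proof. by apply/matrixP => i j; rewrite !mxE mulrN. Qed.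
Lemma tensmxBl m n p q (A B : 'M[C]_(m,n)) (E : 'M[C]_(p,q)) :
  (A - B) *t E = A *t E - B *t E.
Proof. by rewrite tensmxDl tensmxNl. Qed.
Lemma tensmxBr m n p q (A : 'M[C]_(m,n)) (E F : 'M[C]_(p,q)) :
  A *t (E - F) = A *t E - A *t F.
Proof. by rewrite tensmxDr tensmxNr. Qed.
Lemma tensmxZl m n p q c (A : 'M[C]_(m,n)) (E : 'M[C]_(p,q)) :
  (c *: A) *t E = c *: (A *t E).
Proof. by apply/matrixP => i j; rewrite !mxE mulrA. Qed.
Lemma tensmxZr m n p q c (A : 'M[C]_(m,n)) (E : 'M[C]_(p,q)) :
  A *t (c *: E) = c *: (A *t E).
Proof. by apply/matrixP => i j; rewrite !mxE mulrCA. Qed.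
Lemma tensmx_suml m n p q (I : Type) (r : seq I) (P : pred I)
   (F : I -> 'M[C]_(m,n)) (E : 'M[C]_(p,q)) :
  (\sum_(i <- r | P i) F i) *t E = \sum_(i <- r | P i) (F i *t E).
Proof.
elim/big_rec2: _ => [|i x y _ <-]; first by rewrite tens0mx.
by rewrite tensmxDl.
Qed.
Lemma tensmx_sumr m n p q (I : Type) (r : seq I) (P : pred I)
   (F : I -> 'M[C]_(p,q)) (A : 'M[C]_(m,n)) :
  A *t (\sum_(i <- r | P i) F i) = \sum_(i <- r | P i) (A *t F i).
Proof.
elim/big_rec2: _ => [|i x y _ <-]; first by rewrite tensmx0.
by rewrite tensmxDr.
Qed.

Lemma fzrepM d (a b : 'M[C]_d) : fzrep a *m fzrep b = fzrep (a *m b).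
Proof. by rewrite /fzrep tensmx_mul mulmx1. Qed.
Lemma fzrepD d (a b : 'M[C]_d) : fzrep (a + b) = fzrep a + fzrep b.
Proof. exact: tensmxDl. Qed.
Lemma fzrepB d (a b : 'M[C]_d) : fzrep (a - b) = fzrep a - fzrep b.
Proof. exact: tensmxBl. Qed.
Lemma fzrepN d (a : 'M[C]_d) : fzrep (- a) = - fzrep a.
Proof. exact: tensmxNl. Qed.
Lemma fzrepZ d c (a : 'M[C]_d) : fzrep (c *: a) = c *: fzrep a.
Proof. exact: tensmxZl. Qed.
Lemma fzrep0 d : fzrep (0 : 'M[C]_d) = 0.
Proof. exact: tens0mx. Qed.
Lemma fzrep_sum d (I : Type) (r : seq I) (P : pred I) (F : I -> 'M[C]_d) :
  fzrep (\sum_(i <- r | P i) F i) = \sum_(i <- r | P i) fzrep (F i).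
Proof. exact: tensmx_suml. Qed.

Lemma mxdiagM p (p_ : 'I_p -> nat) (A B : forall i, 'M[C]_(p_ i)) :
  \mxdiag_i A i *m \mxdiag_i B i = \mxdiag_i (A i *m B i).
Proof.
rewrite {2}/mxdiag mul_mxdiag_mxblock /mxdiag; apply/eq_mxblock => i j.
by case: eqVneq => [<-|_]; rewrite ?conform_mx_id ?mulmx0.
Qed.

Lemma mxdiagZs p (p_ : 'I_p -> nat) c (A : forall i, 'M[C]_(p_ i)) :
  \mxdiag_i (c *: A i) = c *: \mxdiag_i A i.
Proof.
rewrite -mul_scalar_mx -(mxdiagZ (p_ := p_)) mxdiagM.
by apply/eq_mxdiag => i; rewrite mul_scalar_mx.
Qed.

Lemma commxB n (D A B : 'M[C]_n) : commx D (A - B) = commx D A - commx D B.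
Proof.
rewrite /commx mulmxBr mulmxBl !opprB !addrA.
by rewrite [LHS](ACl (1*4*3*2)%AC).
Qed.

Lemma delta_mid n (i q j : 'I_n) (M : 'M[C]_n) :
  delta_mx i q *m M *m delta_mx q j = M q q *: delta_mx i j.
Proof.
apply/matrixP => a b; rewrite !mxE (bigD1 q) //= big1 ?addr0.
  rewrite !mxE (bigD1 q) //= big1 ?addr0; last first.
    by move=> t /negbTE tq; rewrite !mxE tq andbF mul0r.
  rewrite !mxE !eqxx /= andbT.
  by case: (a == i); case: (b == j); rewrite /= ?mulr1 ?mulr0 ?mul1r ?mul0r.
by move=> t /negbTE tq; rewrite !mxE tq /= mulr0.
Qed.


Lemma commxM n (D A B : 'M[C]_n) : commx D (A *m B) = commx D A *m B + A *m commx D B.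
Proof.
rewrite /commx mulmxBl mulmxBr !mulmxA !addrA.
by rewrite [RHS](ACl (1*4*(2*3))%AC) /= addNr addr0.
Qed.

Lemma commxN n (D A : 'M[C]_n) : commx D (- A) = - commx D A.
Proof. by rewrite /commx mulmxN mulNmx opprB opprK addrC. Qed.

Lemma commx_sum n (D : 'M[C]_n) (I : Type) (r : seq I) (P : pred I) (F : I -> 'M[C]_n) :
  commx D (\sum_(i <- r | P i) F i) = \sum_(i <- r | P i) commx D (F i).
Proof.
elim/big_rec2: _ => [|i x y _ <-]; first by rewrite /commx mulmx0 mul0mx subrr.
by rewrite /commx mulmxDr mulmxDl opprD addrACA.
Qed.

Lemma trcommx n (A B : 'M[C]_n) : \tr (commx A B) = 0.
Proof. by rewrite /commx raddfB /= mxtrace_mulC subrr. Qed.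

Lemma sigmaM k l : sigma C k *m sigma C l =
  - ((k == l)%:R *: 1%:M) - \sum_(m < 3) levi C k l m *: sigma C m.
Proof.
have ii : ('i : C) * 'i = -1 by rewrite -expr2 sqrCi.
elim/ord3P: k; elim/ord3P: l; rewrite sum3 /levi /=;
apply/matrixP => i j; rewrite !mxE !big_ord_recr big_ord0 /= !mxE;
case: i => [[|[|//]] ?]; case: j => [[|[|//]] ?]; rewrite /= ?mxE /=;
 ring: ii.
Qed.

End Gen.

Section Main.
Variable C : numClosedFieldType.
Variable N : nat.
Variable rho : forall n : 'I_N.+1, 'I_3 -> 'M[C]_n.+1.
Hypothesis Hrho : forall n, su2_irrep (rho n).

Local Notation X := (fzX rho).
Local Notation D := (fzD rho).
Local Notation d := (fzdim N).

Lemma rcomm n k l : commx (rho n k) (rho n l) = \sum_(m<3) levi C k l m *: rho n m.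
Proof. by case: (Hrho n). Qed.

Lemma Xcomm k l : commx (X k) (X l) = \sum_(m<3) levi C k l m *: X m.
Proof.
rewrite /commx /fzX !mxdiagM -mxdiagB.
under eq_mxdiag do rewrite -/(commx _ _) rcomm.
rewrite mxdiag_sum; apply: eq_bigr => m _; exact: mxdiagZs.
Qed.

Lemma X0 : X i0 = commx (X i1) (X i2).
Proof. by rewrite Xcomm sum3 /levi /= scale1r !scale0r !addr0. Qed.
Lemma X1 : X i1 = commx (X i2) (X i0).
Proof. by rewrite Xcomm sum3 /levi /= scale1r !scale0r addr0 add0r. Qed.
Lemma X2 : X i2 = commx (X i0) (X i1).
Proof. by rewrite Xcomm sum3 /levi /= scale1r !scale0r !add0r. Qed.

Lemma leviXX m : \sum_(k<3) \sum_(l<3) levi C k l m *: (X k *m X l) = X m.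
Proof.
elim/ord3P: m; rewrite !sum3 /levi /= !scale0r ?scale1r ?scaleN1r !add0r ?addr0.
- by rewrite [RHS]X0.
- by rewrite [RHS]X1 addrC.
- by rewrite [RHS]X2.
Qed.

Definition Cas := \sum_(k < 3) X k *m X k.

Lemma DD : D *m D = - fzrep Cas - D.
Proof.
have E1 k l : (X k *t sigma C k) *m (X l *t sigma C l) =
   - ((k == l)%:R *: (X k *m X l *t 1%:M))
   - \sum_(m < 3) levi C k l m *: (X k *m X l *t sigma C m).
  rewrite tensmx_mul sigmaM tensmxBr tensmxNr tensmxZr tensmx_sumr.
  by congr (- _ - _); apply: eq_bigr => m _; rewrite tensmxZr.
rewrite /fzD mulmx_suml.
transitivity (\sum_(k < 3) \sum_(l < 3) (- ((k == l)%:R *: (X k *m X l *t 1%:M))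
   - \sum_(m < 3) levi C k l m *: (X k *m X l *t sigma C m))).
  by apply: eq_bigr => k _; rewrite mulmx_sumr; apply: eq_bigr => l _; exact: E1.
under eq_bigr do rewrite sumrB.
rewrite sumrB; congr (_ - _).
  rewrite /fzrep /Cas tensmx_suml -sumrN; apply: eq_bigr => k _.
  rewrite sumrN (bigD1 k) //= eqxx scale1r big1 ?addr0 //.
  by move=> l; rewrite eq_sym => /negbTE ->; rewrite scale0r.
under eq_bigr do rewrite exchange_big.
rewrite exchange_big /fzD; apply: eq_bigr => m _.
rewrite -[in RHS]leviXX tensmx_suml; apply: eq_bigr => k _.
by rewrite tensmx_suml; apply: eq_bigr => l _; rewrite tensmxZl.
Qed.

Lemma commD b : commx D (fzrep b) = \sum_(k < 3) commx (X k) b *t sigma C k.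
Proof.
rewrite /commx /fzD mulmx_suml mulmx_sumr -sumrB; apply: eq_bigr => k _.
by rewrite /fzrep !tensmx_mul mulmx1 mul1mx tensmxBl.
Qed.

Definition condS (s : seq ('M[C]_d * 'M[C]_d)) :=
  \sum_(x <- s) fzrep x.1 *m commx D (fzrep x.2) = 0.
Definition valS (s : seq ('M[C]_d * 'M[C]_d)) :=
  \sum_(x <- s) commx D (fzrep x.1) *m commx D (fzrep x.2).
Definition junkS M := exists s, condS s /\ M = valS s.

Lemma cond_of (s : seq ('M[C]_d * 'M[C]_d)) :
  (forall k, \sum_(x <- s) x.1 *m commx (X k) x.2 = 0) -> condS s.
Proof.
move=> H; rewrite /condS.
under eq_bigr do rewrite commD mulmx_sumr.
rewrite exchange_big big1 // => k _.
transitivity (\sum_(x <- s) (x.1 *m commx (X k) x.2) *t sigma C k).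
  by apply: eq_bigr => x _; rewrite /fzrep tensmx_mul mul1mx.
by rewrite -tensmx_suml H tens0mx.
Qed.

Lemma forward s : condS s ->
  valS s = fzrep (\sum_(x <- s) x.1 *m (Cas *m x.2 - x.2 *m Cas)).
Proof.
move=> H; rewrite /valS.
rewrite (eq_bigr _ (fun x _ => @termid C _ _ _ (fzrep x.1) (fzrep x.2) DD)).
rewrite !big_split /= -mulmx_sumr -mulmx_suml H mulmx0 mul0mx !add0r.
rewrite [RHS]fzrep_sum; apply: eq_bigr => x _.
by rewrite !fzrepM -fzrepB fzrepM.
Qed.

Lemma junk2_junkS M : junk2 D M -> junkS M.
Proof.
case=> m [a [b [Hc ->]]].
exists [seq (a j, b j) | j <- index_enum 'I_m]; rewrite /condS /valS !big_map.
by split.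
Qed.

Lemma junkS_junk2 M : junkS M -> junk2 D M.
Proof.
case=> s [Hc ->].
exists (size s), (fun j => (nth (0,0) s j).1), (fun j => (nth (0,0) s j).2).
rewrite /condS /valS in Hc *.
by rewrite !(big_nth (0,0)) !big_mkord in Hc *.
Qed.

Lemma junkS0 : junkS 0.
Proof. by exists [::]; rewrite /condS /valS !big_nil. Qed.

Lemma junkSD M1 M2 : junkS M1 -> junkS M2 -> junkS (M1 + M2).
Proof.
case=> s1 [H1 ->] [s2 [H2 ->]]; exists (s1 ++ s2).
by rewrite /condS /valS !big_cat /= -/(condS s1) -/(condS s2) H1 H2 addr0.
Qed.

Lemma junkS_sum (I : finType) (F : I -> 'M[C]_(d * 2)) :
  (forall i, junkS (F i)) -> junkS (\sum_i F i).
Proof.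
move=> H; elim/big_rec: _ => [|i x _ Hx]; first exact: junkS0.
exact: junkSD.
Qed.

Lemma junkSl a M : junkS M -> junkS (fzrep a *m M).
Proof.
case=> s [Hc ->]; exists [seq (a *m x.1, x.2) | x <- s].
rewrite /condS /valS !big_map /=; split.
  under eq_bigr do rewrite -fzrepM -mulmxA.
  by rewrite -mulmx_sumr Hc mulmx0.
rewrite [RHS](eq_bigr (fun x => commx D (fzrep a) *m (fzrep x.1 *m commx D (fzrep x.2))
   + fzrep a *m (commx D (fzrep x.1) *m commx D (fzrep x.2)))); last first.
  by move=> x _; rewrite -fzrepM commxM mulmxDl -!mulmxA.
by rewrite big_split /= -!mulmx_sumr Hc mulmx0 add0r.
Qed.

Lemma junkSr e M : junkS M -> junkS (M *m fzrep e).
Proof.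
case=> s [Hc ->].
set c := \sum_(x <- s) x.1 *m x.2.
have Hc' : \sum_(x <- s) fzrep x.1 *m fzrep x.2 = fzrep c.
  by rewrite /c fzrep_sum; apply: eq_bigr => x _; rewrite fzrepM.
have Hd : \sum_(x <- s) commx D (fzrep x.1) *m fzrep x.2 = commx D (fzrep c).
  rewrite -Hc' commx_sum.
  transitivity (\sum_(x <- s) (commx D (fzrep x.1 *m fzrep x.2)
      - fzrep x.1 *m commx D (fzrep x.2))).
    by apply: eq_bigr => x _; rewrite commxM addrK.
  by rewrite sumrB Hc subr0.
exists ([seq (x.1, x.2 *m e) | x <- s] ++ [:: (- c, e)]).
rewrite /condS /valS !big_cat /= !big_map !big_cons !big_nil /= !addr0; split.
  under eq_bigr do rewrite -fzrepM commxM mulmxDr !mulmxA.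
  rewrite big_split /= -!mulmx_suml Hc mul0mx add0r Hc'.
  by rewrite fzrepN mulNmx subrr.
rewrite [X in _ = X + _](eq_bigr (fun x => commx D (fzrep x.1) *m commx D (fzrep x.2) *m fzrep e
   + commx D (fzrep x.1) *m fzrep x.2 *m commx D (fzrep e))); last first.
  by move=> x _; rewrite -fzrepM commxM mulmxDr !mulmxA.
by rewrite big_split /= -!mulmx_suml Hd fzrepN commxN mulNmx addrK.
Qed.


Lemma r0 n : rho n i0 = commx (rho n i1) (rho n i2).
Proof. by rewrite rcomm sum3 /levi /= scale1r !scale0r !addr0. Qed.
Lemma r1 n : rho n i1 = commx (rho n i2) (rho n i0).
Proof. by rewrite rcomm sum3 /levi /= scale1r !scale0r addr0 add0r. Qed.
Lemma r2 n : rho n i2 = commx (rho n i0) (rho n i1).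
Proof. by rewrite rcomm sum3 /levi /= scale1r !scale0r !add0r. Qed.

Lemma trr n k : \tr (rho n k) = 0.
Proof. by elim/ord3P: k; [rewrite r0|rewrite r1|rewrite r2]; exact: trcommx. Qed.

Lemma comm11 (A B : 'M[C]_1) : commx A B = 0.
Proof. by rewrite /commx [A]mx11_scalar [B]mx11_scalar -!scalar_mxM mulrC subrr. Qed.

Lemma rho0 k : rho ord0 k = 0.
Proof. by elim/ord3P: k; [rewrite r0|rewrite r1|rewrite r2]; exact: comm11. Qed.

Definition P0 : 'M[C]_d :=
  \mxdiag_(n < N.+1) (if n == ord0 then 1%:M else 0 : 'M[C]_n.+1).

Lemma P0X k : P0 *m X k = 0.
Proof.
rewrite /P0 /fzX mxdiagM -(mxdiag0 (p_ := fun n : 'I_N.+1 => n.+1)).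
apply: eq_mxdiag => n.
by case: eqVneq => [->|_]; [rewrite rho0 mulmx0 | rewrite mul0mx].
Qed.

Lemma P0Cas : P0 *m Cas = 0.
Proof. by rewrite /Cas mulmx_sumr big1 // => k _; rewrite mulmxA P0X mul0mx. Qed.

Lemma trP0 : \tr P0 = 1.
Proof.
rewrite mxtrace_mxdiag (bigD1 ord0) //= mxtrace1 big1 ?addr0 //.
by move=> n /negbTE ->; exact: mxtrace0.
Qed.

Lemma j0ex : exists j0, P0 j0 j0 != 0.
Proof.
case: (pickP (fun j => P0 j j != 0)) => [j Hj|H]; first by exists j.
exfalso; have := trP0; rewrite /mxtrace big1 => [|j _].
  by move/eqP; rewrite eq_sym oner_eq0.
by move: (H j) => /negbFE/eqP.
Qed.

Hypothesis N1 : (1 <= N)%N.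
Definition n1 : 'I_N.+1 := @Ordinal N.+1 1 N1.

Definition P1 : 'M[C]_d :=
  \mxdiag_(n < N.+1) (if n == n1 then 1%:M else 0 : 'M[C]_n.+1).

Lemma trXP1 k : \tr (X k *m P1) = 0.
Proof.
rewrite /fzX /P1 mxdiagM mxtrace_mxdiag big1 // => n _.
by case: eqP => _; [rewrite mulmx1 trr | rewrite mulmx0 mxtrace0].
Qed.

Definition cval := \tr (Cas *m P1).

Lemma cvalE : cval = \sum_(k < 3) \tr (rho n1 k *m rho n1 k).
Proof.
rewrite /cval /Cas mulmx_suml raddf_sum; apply: eq_bigr => k _.
rewrite /fzX /P1 !mxdiagM; rewrite [LHS]/(mxtrace _) -/(mxtrace _) mxtrace_mxdiag (bigD1 n1) //= mulmx1 big1 ?addr0 //.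
by move=> n /negbTE ->; rewrite mulmx0 mxtrace0.
Qed.

Lemma tr_skew m (A : 'M[C]_m) : adjmx A = - A ->
  \tr (A *m A) = - \sum_i \sum_j `|A i j| ^+ 2.
Proof.
move=> H; rewrite /mxtrace -sumrN; apply: eq_bigr => i _.
rewrite mxE -sumrN; apply: eq_bigr => j _.
have -> : A j i = - (A i j)^*.
  move/matrixP: H => /(_ j i); rewrite !mxE => ->.
  by rewrite opprK.
by rewrite normCK mulrN.
Qed.

Lemma cval_neq0 : cval != 0.
Proof.
rewrite cvalE; apply/negP => /eqP H0.
have Hsk k : adjmx (rho n1 k) = - rho n1 k by case: (Hrho n1).
have Hs : \sum_(k < 3) \sum_i \sum_j `|rho n1 k i j| ^+ 2 = 0.
  move: H0; under eq_bigr do rewrite tr_skew //.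
  by rewrite sumrN => /eqP; rewrite oppr_eq0 => /eqP.
have Hz k : rho n1 k = 0.
  apply/matrixP => i j; rewrite mxE.
  have H1 := psumr_eq0P (fun k _ => sumr_ge0 _ (fun i _ => sumr_ge0 _ (fun j _ => exprn_ge0 2 (normr_ge0 _)))) Hs (i := k) isT.
  have H2 := psumr_eq0P (fun i _ => sumr_ge0 _ (fun j _ => exprn_ge0 2 (normr_ge0 _))) H1 (i := i) isT.
  have H3 := psumr_eq0P (fun j _ => exprn_ge0 2 (normr_ge0 _)) H2 (i := j) isT.
  by move: H3 => /eqP; rewrite sqrf_eq0 normr_eq0 => /eqP.
case: (Hrho n1) => _ _ /(_ (delta_mx ord0 ord0)) Hirr.
have H : forall k, stablemx (delta_mx ord0 ord0 : 'M[C]_(n1.+1)) (rho n1 k)^T.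
  by move=> k; rewrite Hz trmx0 mulmx0 sub0mx.
case/orP: (Hirr H).
  by move/eqP/matrixP/(_ ord0 ord0); rewrite !mxE !eqxx /= => /eqP; rewrite oner_eq0.
by rewrite /row_full mxrank_delta.
Qed.

Lemma base j0 : junkS (fzrep (cval *: (delta_mx j0 j0 *m P0))).
Proof.
pose s0 : seq ('M[C]_d * 'M[C]_d) := [seq (delta_mx j0 q, P1 *m delta_mx q j0 *m P0) | q <- index_enum 'I_d].
have Hc : condS s0.
  apply: cond_of => k; rewrite big_map.
  transitivity (\sum_q (((X k *m P1) q q) *: (delta_mx j0 j0 *m P0))).
    apply: eq_bigr => q _ /=.
    rewrite /commx -!mulmxA P0X !mulmx0 subr0 !mulmxA.
    by rewrite -[delta_mx j0 q *m X k *m P1]mulmxA delta_mid scalemxAl.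
  by rewrite -scaler_suml (_ : \sum_q (X k *m P1) q q = \tr (X k *m P1)) // trXP1 scale0r.
exists s0; split => //.
rewrite forward // /s0 big_map; congr fzrep.
transitivity (\sum_q ((Cas *m P1) q q) *: (delta_mx j0 j0 *m P0)).
  by rewrite -scaler_suml.
symmetry; apply: eq_bigr => q _ /=.
rewrite -!mulmxA P0Cas !mulmx0 subr0 !mulmxA.
by rewrite -[delta_mx j0 q *m Cas *m P1]mulmxA delta_mid scalemxAl.
Qed.

Lemma backward Y : junkS (fzrep Y).
Proof.
have [j0 Hj0] := j0ex.
set z := cval * P0 j0 j0.
have zn : z != 0 by rewrite mulf_neq0 // cval_neq0.
have -> : fzrep Y = \sum_a \sum_b (fzrep ((Y a b / z) *: delta_mx a j0)
   *m fzrep (cval *: (delta_mx j0 j0 *m P0)) *m fzrep (delta_mx j0 b)).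
  rewrite {1}[Y]matrix_sum_delta fzrep_sum; apply: eq_bigr => a _.
  rewrite fzrep_sum; apply: eq_bigr => b _.
  rewrite !fzrepM; congr fzrep.
  rewrite -scalemxAl -scalemxAr -scalemxAl !mulmxA mul_delta_mx -scalemxAl delta_mid.
  by rewrite !scalerA -mulrA -/z mulfVK.
apply: junkS_sum => a; apply: junkS_sum => b.
apply: junkSr; apply: junkSl; exact: base.
Qed.

End Main.

Theorem proposition8p3 (C : numClosedFieldType) (N : nat)
  (rho : forall n : 'I_N.+1, 'I_3 -> 'M[C]_n.+1) :
  (1 <= N)%N ->
  (forall n : 'I_N.+1, su2_irrep (rho n)) ->
  forall M : 'M[C]_(fzdim N * 2),
    junk2 (fzD rho) M <-> exists Y : 'M[C]_(fzdim N), M = fzrep Y.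
Proof.
move=> N1 Hrho M; split.
  move/junk2_junkS => [s [Hc ->]].
  by eexists; apply: forward.
case=> Y ->; apply: junkS_junk2; exact: backward.
Qed.
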